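(* Let $\mathbf{A}\in\mathbb{R}^{N\times N}$, $\mathbf{B}\in\mathbb{R}^{N\times m}$, $\mathbf{C}\in\mathbb{R}^{n\times N}$. Then for every integer $i\ge 0$, $$R_i\le \operatorname{rank}(\mathbf{W})-\operatorname{rank}(\mathbf{A}\mathbf{W})\le N-\operatorname{rank}(\mathbf{A}).$$ Consequently, for any integer $0<s\le m$, if $\operatorname{rank}(\mathbf{C}\mathbf{W})=n$ and $s\ge \operatorname{rank}(\mathbf{W})-\operatorname{rank}(\mathbf{A}\mathbf{W})$, then the system is output $s$-sparse controllable.
   Context: A vector in $\mathbb{R}^m$ is $s$-sparse if at most $s$ of its entries are nonzero. The system $(\mathbf{A},\mathbf{B},\mathbf{C})$ with $\mathbf{x}_k=\mathbf{A}\mathbf{x}_{k-1}+\mathbf{B}\mathbf{u}_k$, $\mathbf{y}_k=\mathbf{C}\mathbf{x}_k$ is called output $s$-sparse controllable if there exists an integer $0<K<\infty$ such that for every initial state $\mathbf{x}_0\in\mathbb{R}^N$ and every target $\mathbf{y}_f\in\mathbb{R}^n$ there exist $s$-sparse inputs $\mathbf{u}_1,\dots,\mathbf{u}_K\in\mathbb{R}^m$ with $\mathbf{y}_K=\mathbf{C}\sum_{k=1}^K\mathbf{A}^{K-k}\mathbf{B}\mathbf{u}_k+\mathbf{C}\mathbf{A}^K\mathbf{x}_0=\mathbf{y}_f$ (the supports of the $\mathbf{u}_k$ may differ across $k$). The controllability matrix is $\mathbf{W}=[\mathbf{A}^{N-1}\mathbf{B}\ \ \mathbf{A}^{N-2}\mathbf{B}\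 \cdots\ \mathbf{B}]\in\mathbb{R}^{N\times Nm}$, and for integers $i\ge 0$, $R_i=\operatorname{rank}(\mathbf{C}\mathbf{A}^i\mathbf{W})-\operatorname{rank}(\mathbf{C}\mathbf{A}^{i+1}\mathbf{W})$. *)

(* Defs.v *)
From HB Require Import structures.
From mathcomp Require Import all_boot all_order all_algebra.
From mathcomp Require Import reals.
Set Implicit Arguments. Unset Strict Implicit. Unset Printing Implicit Defensive.
Import Order.TTheory GRing.Theory Num.Theory.
Local Open Scope ring_scope.

Definition ctrb_mx (R : realType) (N m : nat) (A : 'M[R]_N) (B : 'M[R]_(N, m))
  : 'M[R]_(N, \sum_(j < N) m) :=
  \mxrow_(j < N) (A ^+ (N.-1 - j)%N *m B).

Definition R_idx (R : realType) (N m n : nat) (A : 'M[R]_N) (B : 'M[R]_(N, m))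
  (C : 'M[R]_(n, N)) (i : nat) : nat :=
  (\rank (C *m A ^+ i *m ctrb_mx A B) - \rank (C *m A ^+ i.+1 *m ctrb_mx A B))%N.

Definition sparse (R : realType) (m : nat) (s : nat) (v : 'cV[R]_m) : Prop :=
  (#|[set j : 'I_m | v j ord0 != 0%R]| <= s)%N.

(* output s-sparse controllability of (A,B,C); inputs u_1..u_K are u 1 .. u K *)
Definition output_sparse_controllable (R : realType) (N m n : nat)
  (A : 'M[R]_N) (B : 'M[R]_(N, m)) (C : 'M[R]_(n, N)) (s : nat) : Prop :=
  exists K : nat, (0 < K)%N /\
    forall (x0 : 'cV[R]_N) (yf : 'cV[R]_n),
    exists u : nat -> 'cV[R]_m,
      (forall k, (1 <= k <= K)%N -> sparse s (u k)) /\
      C *m (\sum_(1 <= k < K.+1) (A ^+ (K - k)%N *m B *m u k)) + C *m (A ^+ K *m x0) = yf.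

(* Main.v *)
From HB Require Import structures.
From mathcomp Require Import all_boot all_order all_algebra.
From mathcomp Require Import reals.
Require Import Defs.
From Stdlib Require Import Classical.
From mathcomp Require Import zify.
Set Implicit Arguments. Unset Strict Implicit. Unset Printing Implicit Defensive.
Import Order.TTheory GRing.Theory Num.Theory.
Local Open Scope ring_scope.
Definition Xk (F : fieldType) N m (A : 'M[F]_N) (B : 'M[F]_(N,m)) (k : nat)
  : 'M[F]_(m,N) := (A ^+ k *m B)^T.
Definition Vt (F : fieldType) N m (A : 'M[F]_N) (B : 'M[F]_(N,m)) (t : nat)
  : 'M[F]_N := (\sum_(j < N) <<Xk A B (t + j)>>)%MS.

Lemma CHsum (F : fieldType) N (A : 'M[F]_N) k :
  exists c : 'I_N -> F, A ^+ k = \sum_(i < N) c i *: A ^+ i.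
Proof.
case: N A => [|n] A.
  by exists (fun _ => 0); apply/matrixP => -[].
have h := horner_mx_mem A 'X^k.
rewrite rmorphXn /= horner_mx_X in h.
have hd : (degree_mxminpoly A <= n.+1)%N.
  have := dvdp_leq (monic_neq0 (char_poly_monic A)) (mxminpoly_dvd_char A).
  by rewrite size_mxminpoly size_char_poly.
have hs : (powers_mx A (degree_mxminpoly A) <= powers_mx A n.+1)%MS.
  apply/row_subP => i; rewrite rowK.
  by apply: (eq_row_sub (widen_ord hd i)); rewrite rowK.
have /submxP [u eu] := submx_trans h hs.
exists (fun i => u 0 i).
rewrite -[A ^+ k]mxvecK eu mulmx_sum_row linear_sum; apply: eq_bigr => i _.
by rewrite rowK linearZ /= mxvecK.
Qed.
Lemma XkS (F : fieldType) N m (A : 'M[F]_N) (B : 'M[F]_(N,m)) k :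
  Xk A B k.+1 = Xk A B k *m A^T.
Proof. by rewrite /Xk exprS -mulmxE -mulmxA trmx_mul. Qed.

Lemma Xk_in_Vt (F : fieldType) N m (A : 'M[F]_N) (B : 'M[F]_(N,m)) t k :
  (t <= k)%N -> (Xk A B k <= Vt A B t)%MS.
Proof.
move=> tk; have [c ec] := CHsum A (k - t).
have -> : Xk A B k = \sum_(i < N) c i *: Xk A B (t + i).
  rewrite /Xk -(subnKC tk) exprD ec mulr_sumr mulmx_suml linear_sum.
  apply: eq_bigr => i _.
  by rewrite -mulmxE -scalemxAr -scalemxAl linearZ /= mulmxE -exprD.
apply: summx_sub => i _; apply: scalemx_sub.
by rewrite /Vt (sumsmx_sup i) // genmxE.
Qed.

Lemma Vt_S_sub (F : fieldType) N m (A : 'M[F]_N) (B : 'M[F]_(N,m)) t :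
  (Vt A B t.+1 <= Vt A B t)%MS.
Proof.
by apply/sumsmx_subP => j _; rewrite genmxE Xk_in_Vt // addSn ltnW // ltnS leq_addr.
Qed.

Lemma Vt_mono (F : fieldType) N m (A : 'M[F]_N) (B : 'M[F]_(N,m)) t k :
  (t <= k)%N -> (Vt A B k <= Vt A B t)%MS.
Proof.
move=> tk; apply/sumsmx_subP => j _; rewrite genmxE Xk_in_Vt //.
exact: leq_trans tk (leq_addr _ _).
Qed.

Lemma Vt_split (F : fieldType) N m (A : 'M[F]_N) (B : 'M[F]_(N,m)) t :
  (Vt A B t <= Xk A B t + Vt A B t.+1)%MS.
Proof.
apply/sumsmx_subP => j _; rewrite genmxE.
case: j => [[|j] hj] /=.
  by rewrite addn0 addsmxSl.
apply: submx_trans (addsmxSr _ _).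
have hj' : (j < N)%N by apply: ltnW.
by rewrite /Vt (sumsmx_sup (Ordinal hj')) // genmxE addSnnS.
Qed.

Lemma VtMr (F : fieldType) N m (A : 'M[F]_N) (B : 'M[F]_(N,m)) t :
  (Vt A B t *m A^T :=: Vt A B t.+1)%MS.
Proof.
apply: eqmx_trans (sumsmxMr_gen _ _ _) _.
apply: eqmx_sums => j _.
apply: eqmx_trans (genmxE _) _; apply: eqmx_trans (eqmxMr _ (genmxE _)) _.
by rewrite -XkS addSn; apply: eqmx_sym; apply: genmxE.
Qed.

Lemma VtMpow (F : fieldType) N m (A : 'M[F]_N) (B : 'M[F]_(N,m)) t :
  (Vt A B 0 *m (A^T) ^+ t :=: Vt A B t)%MS.
Proof.
elim: t => [|t IH]; first by rewrite expr0 mulmx1.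
rewrite exprSr -mulmxE mulmxA.
exact: eqmx_trans (eqmxMr _ IH) (VtMr _ _ _).
Qed.

Lemma ctrb_Vt (R : realType) N m (A : 'M[R]_N) (B : 'M[R]_(N,m)) :
  ((ctrb_mx A B)^T :=: Vt A B 0)%MS.
Proof.
rewrite /ctrb_mx tr_mxrow.
apply: eqmx_trans (eqmx_col _) _.
rewrite /Vt (reindex_inj rev_ord_inj) /=.
apply/eqmxP; apply/andP; split; apply/sumsmxS => i _;
  rewrite /Xk add0n; have -> : (N.-1 - rev_ord i)%N = i by case: i => i /= hi; lia.
all: by [].
Qed.
Lemma frob_gap (F : fieldType) p N q (Y : 'M[F]_(p,N)) (M : 'M[F]_N) (Z : 'M[F]_(N,q)) :
  (Y *m M <= Y)%MS ->
  (\rank (Y *m Z) - \rank (Y *m M *m Z) <= \rank Y - \rank (Y *m M))%N.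
Proof.
case/submxP => K eK; rewrite eK.
have := mxrank_Frobenius K Y Z; lia.
Qed.

Lemma rank_gap_t (F : fieldType) N m (A : 'M[F]_N) (B : 'M[F]_(N,m)) t :
  (\rank (Vt A B t) - \rank (Vt A B t.+1) <=
   \rank (Vt A B 0) - \rank (Vt A B 1))%N.
Proof.
have hs : (Vt A B 0 *m A^T <= Vt A B 0)%MS.
  by rewrite (VtMr A B 0) Vt_S_sub.
have := frob_gap ((A^T) ^+ t) hs.
rewrite (VtMpow A B t) (VtMr A B 0).
have -> : Vt A B 0 *m A^T *m A^T ^+ t = Vt A B 0 *m A^T ^+ t *m A^T.
  by rewrite -!mulmxA !mulmxE -exprS -exprSr.
by rewrite (eqmxMr _ (VtMpow A B t)) (VtMr A B t).
Qed.

Lemma rankW (R : realType) N m (A : 'M[R]_N) (B : 'M[R]_(N,m)) :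
  \rank (ctrb_mx A B) = \rank (Vt A B 0).
Proof. by rewrite -mxrank_tr (ctrb_Vt A B). Qed.

Lemma rankAW (R : realType) N m (A : 'M[R]_N) (B : 'M[R]_(N,m)) :
  \rank (A *m ctrb_mx A B) = \rank (Vt A B 1).
Proof.
rewrite -mxrank_tr trmx_mul (eqmxMr _ (ctrb_Vt A B)).
by rewrite (VtMr A B 0).
Qed.

Lemma part1 (R : realType) (N m n : nat)
  (A : 'M[R]_N) (B : 'M[R]_(N, m)) (C : 'M[R]_(n, N)) i :
     (R_idx A B C i <= \rank (ctrb_mx A B) - \rank (A *m ctrb_mx A B))%N /\
     (\rank (ctrb_mx A B) - \rank (A *m ctrb_mx A B) <= N - \rank A)%N.
Proof.
split; last first.
  have := mxrank_mul_min A (ctrb_mx A B).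
  move: (\rank A) (\rank (ctrb_mx A B)) (\rank (A *m ctrb_mx A B)) => a b c; lia.
set W := ctrb_mx A B.
have hs : (W^T *m A^T <= W^T)%MS.
  rewrite (eqmxMr _ (ctrb_Vt A B)) (VtMr A B 0) (ctrb_Vt A B).
  exact: Vt_S_sub.
have := frob_gap (C *m A ^+ i)^T hs.
rewrite /R_idx -/W.
have e1 : \rank (C *m A ^+ i *m W) = \rank (W^T *m (C *m A ^+ i)^T).
  by rewrite -mxrank_tr trmx_mul.
have e2 : \rank (C *m A ^+ i.+1 *m W) = \rank (W^T *m A^T *m (C *m A ^+ i)^T).
  by rewrite -mxrank_tr exprSr -mulmxE !mulmxA !trmx_mul !mulmxA.
have e3 : \rank (A *m W) = \rank (W^T *m A^T) by rewrite -mxrank_tr trmx_mul.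
by rewrite e1 e2 e3 -(mxrank_tr W).
Qed.
Definition Dm (F : fieldType) m (S : {set 'I_m}) : 'M[F]_m :=
  diag_mx (\row_i ((i \in S)%:R)).
Arguments Dm {F m} S.

Lemma row_Dm (F : fieldType) m N (S : {set 'I_m}) (X : 'M[F]_(m,N)) i :
  i \in S -> row i (Dm S *m X) = row i X.
Proof.
move=> iS; apply/rowP => j; rewrite /Dm mul_diag_mx !mxE iS mul1r //.
Qed.

Lemma Dm_sub (F : fieldType) m N (S S' : {set 'I_m}) (X : 'M[F]_(m,N)) :
  S \subset S' -> (Dm S *m X <= Dm S' *m X)%MS.
Proof.
move=> sS; have -> : Dm S *m X = Dm S *m (Dm S' *m X); last exact: submxMl.
apply/matrixP => i j; rewrite /Dm !mul_diag_mx !mxE.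
case: (boolP (i \in S)) => iS; last by rewrite !mul0r.
by rewrite (subsetP sS _ iS) !mul1r.
Qed.

Lemma grow (F : fieldType) N m p (P : 'M[F]_(p,N)) (X : 'M[F]_(m,N)) S :
  ~~ (X <= P + Dm S *m X)%MS ->
  exists S' : {set 'I_m}, #|S'| = #|S|.+1 /\
    (\rank (P + Dm S *m X) < \rank (P + Dm S' *m X))%N.
Proof.
case/row_subPn => i hi.
have iS : i \notin S.
  apply: contra hi => iS; rewrite -(row_Dm X iS).
  exact: submx_trans (row_sub _ _) (addsmxSr _ _).
exists (i |: S); split; first by rewrite cardsU1 iS.
have hQ : (P + Dm S *m X <= P + Dm (i |: S) *m X)%MS.
  by apply: addsmxS => //; apply: Dm_sub; apply: subsetUr.
have hr : (row i X <= P + Dm (i |: S) *m X)%MS.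
  rewrite -(row_Dm X (setU11 i S)).
  exact: submx_trans (row_sub _ _) (addsmxSr _ _).
have := mxrank_leqif_sup hQ => -[le eq].
rewrite ltn_neqAle le andbT eq; apply: contra hi => h.
exact: submx_trans hr h.
Qed.

Lemma select (F : fieldType) N m p (P : 'M[F]_(p,N)) (X : 'M[F]_(m,N)) :
  exists S : {set 'I_m}, (X <= P + Dm S *m X)%MS /\
    (#|S| + \rank P <= \rank (P + Dm S *m X))%N.
Proof.
suff H : forall c S, (N - \rank (P + Dm S *m X) <= c)%N ->
    (#|S| + \rank P <= \rank (P + Dm S *m X))%N ->
    exists S : {set 'I_m}, (X <= P + Dm S *m X)%MS /\
    (#|S| + \rank P <= \rank (P + Dm S *m X))%N.
  apply: (H N set0); first by rewrite leq_subr.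
  by rewrite cards0 add0n mxrankS // addsmxSl.
elim => [|c IH] S hc hS; (case: (boolP (X <= P + Dm S *m X)%MS) => [h|h];
  first by exists S); have [S' [e1 e2]] := grow h.
  have := rank_leq_col (P + Dm S' *m X)%MS; lia.
apply: (IH S'); lia.
Qed.

Lemma submod (F : fieldType) N p q r (P : 'M[F]_(p,N)) (Q : 'M[F]_(q,N))
  (Rr : 'M[F]_(r,N)) : (Rr <= P)%MS ->
  (\rank (P + Q) - \rank P <= \rank (Rr + Q) - \rank Rr)%N.
Proof.
move=> hR; have := mxrank_sum_cap P Q; have := mxrank_sum_cap Rr Q.
have := mxrankS (capmxS hR (submx_refl Q)); lia.
Qed.

Definition Tsp (F : fieldType) N m (A : 'M[F]_N) (B : 'M[F]_(N,m))
  (S : nat -> {set 'I_m}) (K : nat) : 'M[F]_N :=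
  (\sum_(t < K) <<Dm (S t) *m Xk A B t>>)%MS.

Lemma Tsp_mono (F : fieldType) N m (A : 'M[F]_N) (B : 'M[F]_(N,m)) (S S' : nat -> {set 'I_m}) K K' :
  (forall t, (t < K)%N -> S t = S' t) -> (K <= K')%N ->
  (Tsp A B S K <= Tsp A B S' K')%MS.
Proof.
move=> hS hK; apply/sumsmx_subP => t _; rewrite genmxE hS //.
by apply: (sumsmx_sup (widen_ord hK t)) => //; rewrite genmxE.
Qed.

Lemma Tsp_level (F : fieldType) N m (A : 'M[F]_N) (B : 'M[F]_(N,m)) (S : nat -> {set 'I_m}) K t :
  (t < K)%N -> (Dm (S t) *m Xk A B t <= Tsp A B S K)%MS.
Proof.
move=> tK; by apply: (sumsmx_sup (Ordinal tK)) => //; rewrite genmxE.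
Qed.

Lemma Tsp_row (F : fieldType) N m (A : 'M[F]_N) (B : 'M[F]_(N,m)) (S : nat -> {set 'I_m}) K t i :
  (t < K)%N -> i \in S t -> (row i (Xk A B t) <= Tsp A B S K)%MS.
Proof.
move=> tK iS; rewrite -(row_Dm _ iS).
exact: submx_trans (row_sub _ _) (Tsp_level _ _ _ tK).
Qed.
Lemma stab (F : fieldType) N m (A : 'M[F]_N) (B : 'M[F]_(N,m)) :
  exists M, forall t, (M <= t)%N -> (Vt A B M <= Vt A B t)%MS.
Proof.
suff H : forall v M, (\rank (Vt A B M) <= v)%N ->
    exists M, forall t, (M <= t)%N -> (Vt A B M <= Vt A B t)%MS.
  exact: (H N 0%N (rank_leq_col _)).
elim => [|v IH] M hv;
  (case: (classic (forall t, (M <= t)%N -> \rank (Vt A B t) = \rank (Vt A B M)))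
     => [h|h]; first (exists M => t hMt;
     have := mxrank_leqif_sup (Vt_mono A B hMt) => -[_ <-];
     by rewrite h);
   have [t ht] := not_all_ex_not _ _ h;
   have hMt : (M <= t)%N by apply/idPn => hn; apply: ht => hh; rewrite hh in hn);
  have ne : \rank (Vt A B t) <> \rank (Vt A B M) by move=> e; apply: ht.
  have := mxrankS (Vt_mono A B hMt); lia.
apply: (IH t); have := mxrankS (Vt_mono A B hMt); lia.
Qed.
Lemma phase1 (F : fieldType) N m (A : 'M[F]_N) (B : 'M[F]_(N,m)) s :
  (\rank (Vt A B 0) - \rank (Vt A B 1) <= s)%N ->
  forall t, exists S : nat -> {set 'I_m},
    (forall k, #|S k| <= s)%N /\ (forall k, (t <= k)%N -> S k = set0) /\
    (Vt A B 0 <= Tsp A B S t + Vt A B t)%MS.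
Proof.
move=> hd; elim => [|t [S [hs [h0 hV]]]].
  exists (fun _ => set0); split; first by move=> k; rewrite cards0.
  by split => //; rewrite addsmxSr.
set P := (Tsp A B S t + Vt A B t.+1)%MS.
have [Sel [hX hc]] := select P (Xk A B t).
pose S' := fun k => if k == t then Sel else S k.
have hT : (Tsp A B S t <= Tsp A B S' t.+1)%MS.
  by apply: Tsp_mono => // k hk; rewrite /S' (ltn_eqF hk).
have hL : (Dm Sel *m Xk A B t <= Tsp A B S' t.+1)%MS.
  by have := Tsp_level A B S' (ltnSn t); rewrite /S' eqxx.
exists S'; split.
  move=> k; rewrite /S'; case: eqP => _; last exact: hs.
  have h1 : (\rank (P + Dm Sel *m Xk A B t) <= \rank (P + Xk A B t))%N.
    by apply: mxrankS; apply: addsmxS => //; apply: submxMl.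
  have h2 := submod (Xk A B t) (addsmxSr (Tsp A B S t) (Vt A B t.+1)).
  have h3 : \rank (Vt A B t.+1 + Xk A B t)%MS = \rank (Vt A B t).
    apply/eqP; rewrite eqn_leq; apply/andP; split; apply: mxrankS.
      by rewrite addsmx_sub Vt_S_sub Xk_in_Vt.
    by rewrite addsmxC Vt_split.
  have h4 := rank_gap_t A B t.
  rewrite -/P in h2; lia.
split.
  by move=> k hk; rewrite /S' (gtn_eqF hk); apply: h0; apply: ltnW.
apply: submx_trans hV _.
have hP : (P <= Tsp A B S' t.+1 + Vt A B t.+1)%MS.
  by apply: addsmxS.
rewrite addsmx_sub; apply/andP; split.
  exact: submx_trans hT (addsmxSl _ _).
apply: submx_trans (Vt_split A B t) _.
rewrite addsmx_sub; apply/andP; split; last first.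
  exact: submx_trans (addsmxSr _ _) hP.
apply: submx_trans hX _.
by rewrite addsmx_sub hP /= (submx_trans hL (addsmxSl _ _)).
Qed.
Lemma phase2 (F : fieldType) N m (A : 'M[F]_N) (B : 'M[F]_(N,m)) s M :
  (0 < s)%N -> (forall t, (M <= t)%N -> (Vt A B M <= Vt A B t)%MS) ->
  forall c t (S : nat -> {set 'I_m}), (M <= t)%N ->
    (forall k, #|S k| <= s)%N -> (forall k, (t <= k)%N -> S k = set0) ->
    (Vt A B 0 <= Tsp A B S t + Vt A B M)%MS ->
    (N - \rank (Tsp A B S t) <= c)%N ->
    exists K (S' : nat -> {set 'I_m}),
      (forall k, #|S' k| <= s)%N /\ (Vt A B 0 <= Tsp A B S' K)%MS.
Proof.
move=> s0 hst; elim => [|c IH] t S hMt hs h0 hV hc;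
 (case: (boolP (Vt A B 0 <= Tsp A B S t)%MS) => [hd|hd];
  first by exists t, S);
 (have [t' [i [htt hi]]] : exists t' i, (t <= t')%N /\
     ~~ (row i (Xk A B t') <= Tsp A B S t)%MS;
  first (apply: NNPP => hn; move/negP: hd; apply;
   apply: submx_trans hV _; rewrite addsmx_sub submx_refl /=;
   apply: submx_trans (hst _ hMt) _;
   apply/sumsmx_subP => j _; rewrite genmxE; apply/row_subP => i;
   apply/negPn/negP => hi; apply: hn; exists (t + j)%N, i; split => //;
   exact: leq_addr));
 pose S' := fun k => if k == t' then [set i] else S k;
 (have hT : (Tsp A B S t <= Tsp A B S' t'.+1)%MS by
   apply: Tsp_mono; last exact: leqW;
   move=> k hk; rewrite /S' (ltn_eqF (leq_trans hk htt)));
 (have hr : (row i (Xk A B t') <= Tsp A B S' t'.+1)%MS by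
   apply: Tsp_row => //; rewrite /S' eqxx set11);
 (have hlt : (\rank (Tsp A B S t) < \rank (Tsp A B S' t'.+1))%N by
   have := mxrank_leqif_sup hT => -[le eq];
   rewrite ltn_neqAle le andbT eq; apply: contra hi => h;
   exact: submx_trans hr h).
  have := rank_leq_col (Tsp A B S' t'.+1); lia.
apply: (IH t'.+1 S').
- exact: leq_trans hMt (leqW htt).
- by move=> k; rewrite /S'; case: eqP => _; rewrite ?cards1.
- by move=> k hk; rewrite /S' (gtn_eqF hk); apply: h0; apply: leq_trans htt (ltnW hk).
- by apply: submx_trans hV _; apply: addsmxS.
- have := rank_leq_col (Tsp A B S' t'.+1); lia.
Qed.
Lemma reach (R : realType) (N m n : nat)
  (A : 'M[R]_N) (B : 'M[R]_(N, m)) (C : 'M[R]_(n, N)) s K0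
  (S : nat -> {set 'I_m}) :
  (forall k, #|S k| <= s)%N -> (Vt A B 0 <= Tsp A B S K0)%MS ->
  \rank (C *m ctrb_mx A B) = n -> output_sparse_controllable A B C s.
Proof.
move=> hs hV hCW; exists K0.+1; split => // x0 yf.
set K := K0.+1; set W := ctrb_mx A B.
have hrf : row_free (C *m W) by rewrite /row_free hCW.
have [Bi hBi] := row_freeP hrf.
set y := yf - C *m (A ^+ K *m x0).
set v := W *m (Bi *m y).
have hv : C *m v = y by rewrite /v !mulmxA hBi mul1mx.
have hvT : (v^T <= Tsp A B S K)%MS.
  rewrite /v trmx_mul; apply: submx_trans (submxMl _ _) _.
  rewrite (ctrb_Vt A B); apply: submx_trans hV _.
  exact: Tsp_mono.
have /sub_sums_genmxP [a ea] := hvT.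
pose b t := a (inord t).
pose w t : 'cV[R]_m := (b t *m Dm (S t))^T.
exists (fun k => w (K - k)%N); split.
  move=> k _; rewrite /sparse; apply: leq_trans (hs (K - k)%N).
  apply: subset_leq_card; apply/subsetP => j; rewrite inE /w /Dm mxE mul_mx_diag mxE mxE.
  by case: (j \in S (K - k)%N); rewrite ?mulr0 ?eqxx.
have es : \sum_(1 <= k < K.+1) (A ^+ (K - k)%N *m B *m w (K - k)%N) = v.
  rewrite big_nat_rev big_add1 /= big_mkord.
  apply: trmx_inj; rewrite linear_sum /= ea.
  apply: eq_bigr => i _.
  have -> : (K - (1 + K.+1 - i.+2))%N = i by have := ltn_ord i; rewrite /K; lia.
  by rewrite /w /b (@inord_val K0) trmx_mul trmxK -mulmxA.
by rewrite es hv /y subrK.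
Qed.
Theorem mainTheorem5 (R : realType) (N m n : nat)
  (A : 'M[R]_N) (B : 'M[R]_(N, m)) (C : 'M[R]_(n, N)) :
  (forall i : nat,
     (R_idx A B C i <= \rank (ctrb_mx A B) - \rank (A *m ctrb_mx A B))%N /\
     (\rank (ctrb_mx A B) - \rank (A *m ctrb_mx A B) <= N - \rank A)%N) /\
  (forall s : nat, (0 < s <= m)%N ->
     \rank (C *m ctrb_mx A B) = n ->
     (\rank (ctrb_mx A B) - \rank (A *m ctrb_mx A B) <= s)%N ->
     output_sparse_controllable A B C s).
Proof.
split; first by move=> i; exact: part1.
move=> s /andP [s0 _] hCW hd.
have hd' : (\rank (Vt A B 0) - \rank (Vt A B 1) <= s)%N.
  by rewrite -rankW -rankAW.
have [M hM] := stab A B.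
have [S [hs [h0 hV]]] := phase1 hd' M.
have [K [S' [hs' hV']]] :=
  phase2 s0 hM (leqnn M) hs h0 hV (leq_subr (\rank (Tsp A B S M)) N).
exact: reach hs' hV' hCW.
Qed.
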